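(* Let $\varepsilon\in[0,1)$ and $\mathcal{P},\mathcal{E}\subseteq\mathcal{D}(P)$. Then $$\beta\overline{W}_{\mathrm{GPO},\varepsilon}(\mathcal{P},\mathcal{E})=D_{\min,\varepsilon}(\mathcal{P}\|\mathcal{E}).$$
   Context: All Hilbert spaces are finite-dimensional; $\mathcal{D}(P)$ is the set of density operators on $P$; $T(X,Y)=\tfrac12\|X-Y\|_1$. Battery: qubit $B$ with basis $\{|0\rangle,|1\rangle\}$, $\pi_M=(1-\tfrac1M)|0\rangle\langle0|+\tfrac1M|1\rangle\langle1|$ for $M>1$, and $\Pi_M=\{\pi_{M'}:M'\in[M,\infty)\}$ (dirty battery $(|1\rangle\langle1|,\Pi_M)$). The one-shot extractable work into a dirty battery under a class $\mathfrak{F}$ is $\beta\overline{W}_{\mathfrak{F},\varepsilon}(\mathcal{P},\mathcal{E})=\log\sup\{M>1:\exists\mathcal{F}\in\mathfrak{F}\text{ with }T(\mathcal{F}(\rho),|1\rangle\langle1|)\le\varepsilon\ \forall\rho\in\mathcal{P}\text{ and }\mathcal{F}(\tau)\in\Pi_M\ \forall\tau\in\mathcal{E}\}$. GPO here means the class of CPTP maps, Gibbs preservation being the condition $\mathcal{F}(\tau)\in\Pi_M$. The smoothed min-relative entropy between sets is $D_{\min,\varepsilon}(\mathcal{P}\|\mathcal{E})=-\log\min\{\sup_{\tau\in\mathcal{E}}\operatorname{tr}[\tau E]:0\le E\le I,\ \sup_{\rho\in\mathcal{P}}\operatorname{tr}[\rho(I-E)]\le\varepsilon\}$, with $-\log 0=+\infty$.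 *)

(* Defs.v *)
From HB Require Import structures.
From mathcomp Require Import all_boot all_order all_algebra.
From mathcomp Require Import all_classical all_reals.
From mathcomp Require Import ereal exp.
From mathcomp Require Import complex mxtens.
Set Implicit Arguments. Unset Strict Implicit. Unset Printing Implicit Defensive.
Import Order.TTheory GRing.Theory Num.Theory.
Local Open Scope classical_set_scope.
Local Open Scope ring_scope.

Section QDefs.
Variable R : realType.
Local Notation C := R[i].

Definition adj m n (A : 'M[C]_(m, n)) : 'M[C]_(n, m) :=
  \matrix_(i, j) conjc (A j i).

Definition psd n (A : 'M[C]_n) : Prop :=
  adj A = A /\ forall v : 'cV[C]_n, (0 <= (adj v *m A *m v) ord0 ord0)%R.

(* density operators D(P), dim P = n *)
Definition density n (rho : 'M[C]_n) : Prop := psd rho /\ \tr rho = 1.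

Definition effect n (E : 'M[C]_n) : Prop := psd E /\ psd (1%:M - E).

Definition unitary n (U : 'M[C]_n) : Prop := adj U *m U = 1%:M.

(* Trace norm = sum of singular values.  [is_trnorm A t] : A has a singular
   value decomposition A = U diag(s) V^* with s >= 0 and t = sum_i s_i
   (the value t does not depend on the chosen decomposition). *)
Definition is_trnorm n (A : 'M[C]_n) (t : R) : Prop :=
  exists (U V : 'M[C]_n) (s : 'rV[R]_n),
    [/\ unitary U, unitary V, (forall i, 0 <= s ord0 i),
        A = U *m diag_mx (map_mx (real_complex R) s) *m adj V
      & t = \sum_i s ord0 i].

Definition trdist_le n (X Y : 'M[C]_n) (eps : R) : Prop :=
  exists t, is_trnorm (X - Y) t /\ t / 2 <= eps.

(* id_k (x) F applied to X : 'M_(k*n) (block decomposition along mxtens_index) *)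
Definition blk k n (X : 'M[C]_(k * n)) (i j : 'I_k) : 'M[C]_n :=
  \matrix_(a, b) X (mxtens_index (i, a)) (mxtens_index (j, b)).

Definition ampl k n m (F : 'M[C]_n -> 'M[C]_m) (X : 'M[C]_(k * n))
  : 'M[C]_(k * m) :=
  \matrix_(p, q) F (blk X (mxtens_unindex p).1 (mxtens_unindex q).1)
                    (mxtens_unindex p).2 (mxtens_unindex q).2.

Definition completely_positive n m (F : 'M[C]_n -> 'M[C]_m) : Prop :=
  forall k (X : 'M[C]_(k * n)), psd X -> psd (ampl F X).

Definition trace_preserving n m (F : 'M[C]_n -> 'M[C]_m) : Prop :=
  forall X, \tr (F X) = \tr X.

(* CPTP maps from P (dim n) to the battery qubit B *)
Definition CPTP n (F : {linear 'M[C]_n -> 'M[C]_2}) : Prop :=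
  completely_positive F /\ trace_preserving F.

Definition ket1 : 'M[C]_2 := delta_mx 1 1.
Definition piM (M : R) : 'M[C]_2 :=
  diag_mx (\row_(i < 2) real_complex R (if i == 0 then (1 - M^-1) else M^-1)).
Definition in_PiM (M : R) (X : 'M[C]_2) : Prop :=
  exists M', M <= M' /\ X = piM M'.

(* natural log extended to [0, +oo] (used only on values >= 1) *)
Definition lnE (x : \bar R) : \bar R :=
  if x is +oo%E then +oo%E else (ln (fine x))%:E.

Definition gpo_feasible n (Ps Es : set 'M[C]_n) (eps M : R) : Prop :=
  1 < M /\ exists F : {linear 'M[C]_n -> 'M[C]_2},
    [/\ CPTP F,
        (forall rho, Ps rho -> trdist_le (F rho) ket1 eps)
      & (forall tau, Es tau -> in_PiM M (F tau))].

(* beta W_{GPO,eps}(P,E) = log sup {M > 1 | feasible}; sup of the empty set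
   taken as 1 (infimum of the range M > 1), so the value is then 0. *)
Definition betaW_GPO n (Ps Es : set 'M[C]_n) (eps : R) : \bar R :=
  lnE (ereal_sup ([set 1%E] `|` [set (M%:E)%E | M in gpo_feasible Ps Es eps])).

(* sup_{tau in E} tr[tau E]; sup over an empty family taken as 0 *)
Definition supTr n (Es : set 'M[C]_n) (E : 'M[C]_n) : \bar R :=
  ereal_sup ([set 0%E] `|` [set ((complex.Re (\tr (tau *m E)))%:E)%E | tau in Es]).

Definition Dmin_feasible n (Ps : set 'M[C]_n) (eps : R) (E : 'M[C]_n) : Prop :=
  effect E /\ forall rho, Ps rho -> complex.Re (\tr (rho *m (1%:M - E))) <= eps.

Definition Dmin n (Ps Es : set 'M[C]_n) (eps : R) : \bar R :=
  let m := ereal_inf [set supTr Es E | E in Dmin_feasible Ps eps] in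
  if m == 0%E then +oo%E else (- ln (fine m))%:E.

End QDefs.

(* Main.v *)
Require Import Defs.
From HB Require Import structures.
From mathcomp Require Import all_boot all_order all_algebra.
From mathcomp Require Import all_classical all_reals.
From mathcomp Require Import ereal exp.
From mathcomp Require Import complex mxtens.
From mathcomp Require Import spectral sesquilinear.
From mathcomp Require Import ring lra.
Set Implicit Arguments. Unset Strict Implicit. Unset Printing Implicit Defensive.
Import Order.TTheory GRing.Theory Num.Theory.
Local Open Scope classical_set_scope.
Local Open Scope ring_scope.
Section S.
Variable R : realType.
Local Notation C := R[i].
Lemma ReD (x y : C) : complex.Re (x + y) = complex.Re x + complex.Re y.
Proof. by case: x => a b; case: y => c d. Qed.
Lemma ImD (x y : C) : complex.Im (x + y) = complex.Im x + complex.Im y.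
Proof. by case: x => a b; case: y => c d. Qed.
Lemma ReM (x y : C) : complex.Re (x * y) = complex.Re x * complex.Re y - complex.Im x * complex.Im y.
Proof. by case: x => a b; case: y => c d. Qed.
Lemma ImM (x y : C) : complex.Im (x * y) = complex.Re x * complex.Im y + complex.Im x * complex.Re y.
Proof. by case: x => a b; case: y => c d. Qed.
Lemma ReN (x : C) : complex.Re (- x) = - complex.Re x.
Proof. by case: x. Qed.
Lemma ImN (x : C) : complex.Im (- x) = - complex.Im x.
Proof. by case: x. Qed.
Lemma ReB (x y : C) : complex.Re (x - y) = complex.Re x - complex.Re y.
Proof. by rewrite ReD ReN. Qed.
Lemma ImB (x y : C) : complex.Im (x - y) = complex.Im x - complex.Im y.
Proof. by rewrite ImD ImN. Qed.
Lemma Re_sum I (r : seq I) (P : pred I) (F : I -> C) :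
  complex.Re (\sum_(i <- r | P i) F i) = \sum_(i <- r | P i) complex.Re (F i).
Proof. by elim/big_rec2: _ => // i y1 y2 _ <-; rewrite ReD. Qed.
Lemma Im_sum I (r : seq I) (P : pred I) (F : I -> C) :
  complex.Im (\sum_(i <- r | P i) F i) = \sum_(i <- r | P i) complex.Im (F i).
Proof. by elim/big_rec2: _ => // i y1 y2 _ <-; rewrite ImD. Qed.
Lemma ge0C (z : C) : (0 <= z) = (complex.Im z == 0) && (0 <= complex.Re z).
Proof. by rewrite lecE /= eq_sym. Qed.
Lemma ge0C_real (z : C) : 0 <= z -> z = (complex.Re z)%:C%C.
Proof. by case: z => a b; rewrite ge0C /= => /andP[/eqP -> _]. Qed.

Lemma adjD m n (A B : 'M[C]_(m, n)) : adj (A + B) = adj A + adj B.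
Proof. by apply/matrixP => i j; rewrite !mxE rmorphD. Qed.
Lemma adjN m n (A : 'M[C]_(m, n)) : adj (- A) = - adj A.
Proof. by apply/matrixP => i j; rewrite !mxE rmorphN. Qed.
Lemma adjB m n (A B : 'M[C]_(m, n)) : adj (A - B) = adj A - adj B.
Proof. by rewrite adjD adjN. Qed.
Lemma adjZ m n (x : C) (A : 'M[C]_(m, n)) : adj (x *: A) = conjc x *: adj A.
Proof. by apply/matrixP => i j; rewrite !mxE rmorphM. Qed.
Lemma adjK m n (A : 'M[C]_(m, n)) : adj (adj A) = A.
Proof. by apply/matrixP => i j; rewrite !mxE conjcK. Qed.
Lemma adjM m n p (A : 'M[C]_(m, n)) (B : 'M[C]_(n, p)) : adj (A *m B) = adj B *m adj A.
Proof.
apply/matrixP => i j; rewrite !mxE rmorph_sum; apply: eq_bigr => k _.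
by rewrite !mxE rmorphM mulrC.
Qed.
Lemma adj1 n : adj (1%:M : 'M[C]_n) = 1%:M.
Proof.
apply/matrixP => i j; rewrite !mxE.
rewrite eq_sym; case: (i == j).
  exact: conjc1.
exact: conjc0.
Qed.

Definition qf n (A : 'M[C]_n) (v : 'cV[C]_n) := (adj v *m A *m v) ord0 ord0.
Definition qfpos n (A : 'M[C]_n) := forall v, 0 <= qf A v.

Lemma qf_tr n (A : 'M[C]_n) v : qf A v = \tr ((v *m adj v) *m A).
Proof. by rewrite /qf -trace_mx11 mxtrace_mulC mulmxA. Qed.

Lemma qfD n (A B : 'M[C]_n) v : qf (A + B) v = qf A v + qf B v.
Proof. by rewrite !qf_tr mulmxDr mxtraceD. Qed.
Lemma qfN n (A : 'M[C]_n) v : qf (- A) v = - qf A v.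
Proof. by rewrite !qf_tr mulmxN raddfN. Qed.
Lemma qfB n (A B : 'M[C]_n) v : qf (A - B) v = qf A v - qf B v.
Proof. by rewrite qfD qfN. Qed.
Lemma qfZ n x (A : 'M[C]_n) v : qf (x *: A) v = x * qf A v.
Proof. by rewrite !qf_tr -scalemxAr mxtraceZ. Qed.

Definition cross n (A : 'M[C]_n) (u v : 'cV[C]_n) := (adj u *m A *m v) ord0 ord0.
Lemma qf_add n (A : 'M[C]_n) u v :
  qf A (u + v) = qf A u + qf A v + cross A u v + cross A v u.
Proof.
rewrite /qf /cross adjD !mulmxDl !mulmxDr !mxE; ring.
Qed.
Lemma cross_delta n (A : 'M[C]_n) c d :
  cross A (delta_mx c ord0) (delta_mx d ord0) = A c d.
Proof.
rewrite /cross !mxE (bigD1 d) //= big1 ?addr0; last first.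
  by move=> k /negPf kd; rewrite !mxE kd mulr0.
rewrite !mxE eqxx mulr1 (bigD1 c) //= big1 ?addr0; last first.
  by move=> k /negPf kc; rewrite !mxE kc andFb conjc0 mul0r.
by rewrite !mxE !eqxx andTb conjc1 mul1r.
Qed.
Lemma qf_delta n (A : 'M[C]_n) c : qf A (delta_mx c ord0) = A c c.
Proof. exact: cross_delta. Qed.
Lemma crossZl n (A : 'M[C]_n) x u v : cross A (x *: u) v = conjc x * cross A u v.
Proof. by rewrite /cross adjZ -!scalemxAl mxE. Qed.
Lemma crossZr n (A : 'M[C]_n) x u v : cross A u (x *: v) = x * cross A u v.
Proof. by rewrite /cross -!scalemxAr mxE. Qed.

Lemma qf_scale n (A : 'M[C]_n) x v : qf A (x *: v) = conjc x * x * qf A v.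
Proof. by rewrite /qf adjZ -!scalemxAl -scalemxAr scalerA mxE. Qed.

Lemma qfpos_herm n (A : 'M[C]_n) : qfpos A -> adj A = A.
Proof.
move=> hA; apply/matrixP => c d; rewrite mxE.
have Im0 v : complex.Im (qf A v) = 0.
  by have := hA v; rewrite ge0C => /andP[/eqP].
have hc := Im0 (delta_mx c ord0); have hd := Im0 (delta_mx d ord0).
rewrite !qf_delta in hc hd.
have h1 := Im0 (delta_mx c ord0 + delta_mx d ord0).
have h2 := Im0 (delta_mx c ord0 + 'i *: delta_mx d ord0).
rewrite !qf_add qf_scale !qf_delta /qf -/(cross _ _ _) -/(cross _ _ _) !crossZl !crossZr !cross_delta in h1 h2.
move: h1 h2 hc hd; rewrite !ImD !ImM /=.
case: (A c c) => [a1 a2]; case: (A d d) => [b1 b2].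
case: (A c d) => [x1 x2]; case: (A d c) => [y1 y2] /= h1 h2 hc hd.
congr Complex; lra.
Qed.

Lemma psd_of_qf n (A : 'M[C]_n) : qfpos A -> psd A.
Proof. by move=> h; split; [exact: qfpos_herm | exact: h]. Qed.
Lemma qf_of_psd n (A : 'M[C]_n) : psd A -> qfpos A.
Proof. by case. Qed.

Lemma qf_conj n (M A : 'M[C]_n) k :
  qf A (adj M *m delta_mx k ord0) = (M *m A *m adj M) k k.
Proof.
by rewrite -(cross_delta (M *m A *m adj M)) /cross /qf adjM adjK !mulmxA.
Qed.

Lemma tstar_adj m n (B : 'M[C]_(m, n)) : map_mx Num.Def.conjC (B ^T) = adj B.
Proof. by apply/matrixP => i j; rewrite !mxE. Qed.

Lemma psd_decomp n (A : 'M[C]_n) : psd A ->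
  exists (P : 'M[C]_n) (d : 'rV[C]_n),
    (forall k, 0 <= d ord0 k) /\ A = adj P *m diag_mx d *m P.
Proof.
move=> [hA hq].
have nA : A \is normalmx.
  by rewrite qualifE tstar_adj hA.
have /unitarymxP hU := spectral_unitarymx A.
have eA := orthomx_spectralP nA.
rewrite invmx_unitary ?spectral_unitarymx // tstar_adj in eA.
rewrite tstar_adj in hU.
exists (spectralmx A), (spectral_diag A); split => //.
move=> k; have : 0 <= qf A (adj (spectralmx A) *m delta_mx k ord0) by apply: hq.
rewrite qf_conj {2}eA !mulmxA hU mul1mx -mulmxA hU mulmx1 mxE eqxx mulr1n.
done.
Qed.

Lemma tr_psd_ge0 n (A Y : 'M[C]_n) : psd A -> qfpos Y -> 0 <= \tr (A *m Y).
Proof.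
move=> /psd_decomp [P [d [hd ->]]] hY.
rewrite -!mulmxA mxtrace_mulC !mulmxA -!mulmxA mul_diag_mx /mxtrace.
apply: sumr_ge0 => k _; rewrite mxE; apply: mulr_ge0 => //.
by rewrite mulmxA -qf_conj.
Qed.

Lemma tr_psd_ge0' n (A Y : 'M[C]_n) : psd A -> psd Y -> 0 <= \tr (Y *m A).
Proof. by move=> hA [_ hY]; rewrite mxtrace_mulC; exact: tr_psd_ge0. Qed.

Lemma sum_tens k n (G : 'I_(k * n) -> C) :
  \sum_p G p = \sum_i \sum_c G (mxtens_index (i, c)).
Proof.
rewrite pair_bigA /= (reindex (@mxtens_index k n)) /=.
  by apply: eq_bigr => -[i c].
by exists (@mxtens_unindex k n) => x _; rewrite ?mxtens_indexK ?mxtens_unindexK.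
Qed.

Lemma qf_sum n (A : 'M[C]_n) v :
  qf A v = \sum_p \sum_q conjc (v p ord0) * A p q * v q ord0.
Proof.
rewrite /qf mxE exchange_big /=; apply: eq_bigr => q _.
rewrite !mxE mulr_suml; apply: eq_bigr => p _; by rewrite !mxE.
Qed.

Lemma qf_sumr n I (r : seq I) (P : pred I) (F : I -> 'M[C]_n) v :
  qf (\sum_(i <- r | P i) F i) v = \sum_(i <- r | P i) qf (F i) v.
Proof.
elim/big_rec2: _ => [|i y1 y2 _ <-]; last by rewrite qfD.
by rewrite /qf mulmx0 mul0mx mxE.
Qed.

Lemma blockform k n (A : 'M[C]_n) (X : 'M[C]_(k * n)) (w : 'I_k -> C) :
  psd A -> psd X ->
  0 <= \sum_i \sum_j conjc (w i) * \tr (A *m blk X i j) * w j.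
Proof.
move=> hA [_ hX].
pose Z := \sum_i \sum_j (conjc (w i) * w j) *: blk X i j.
have -> : \sum_i \sum_j conjc (w i) * \tr (A *m blk X i j) * w j = \tr (A *m Z).
  rewrite /Z mulmx_sumr raddf_sum /=; apply: eq_bigr => i _.
  rewrite mulmx_sumr raddf_sum /=; apply: eq_bigr => j _.
  by rewrite -scalemxAr mxtraceZ mulrAC.
apply: tr_psd_ge0 => // u.
pose x : 'cV[C]_(k * n) :=
  \col_p (w (mxtens_unindex p).1 * u (mxtens_unindex p).2 ord0).
have := hX x; rewrite -/(qf X x) => hx.
suff -> : qf Z u = qf X x by [].
rewrite /Z qf_sumr qf_sum sum_tens; apply: eq_bigr => i _.
rewrite qf_sumr.
under eq_bigr => j _ do rewrite qfZ qf_sum mulr_sumr.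
rewrite exchange_big /=; apply: eq_bigr => c _.
rewrite sum_tens; apply: eq_bigr => j _.
rewrite mulr_sumr; apply: eq_bigr => d _.
rewrite !mxE !mxtens_indexK /= rmorphM; ring.
Qed.
End S.

Definition mp (R : realType) n (A0 A1 : 'M[R[i]]_n) (X : 'M[R[i]]_n) : 'M[R[i]]_2 :=
  \matrix_(a, b) ((a == b)%:R * \tr ((if a == 0 then A0 else A1) *m X)).

Lemma mp_linear (R : realType) n (A0 A1 : 'M[R[i]]_n) : linear (mp A0 A1).
Proof.
move=> x X Y; apply/matrixP => a b; rewrite !mxE mulmxDr -scalemxAr mxtraceD mxtraceZ.
ring.
Qed.

HB.instance Definition _ (R : realType) n (A0 A1 : 'M[R[i]]_n) :=
  GRing.isLinear.Build _ _ _ _ (mp A0 A1) (@mp_linear R n A0 A1).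


Lemma sum_kron (R : realType) (T : finType) (F : T -> R[i]) a :
  \sum_b F b * (a == b)%:R = F a.
Proof.
rewrite (bigD1 a) //= eqxx mulr1 big1 ?addr0 // => b /negPf.
by rewrite eq_sym => ->; rewrite mulr0.
Qed.

Lemma mp_CP (R : realType) n (A0 A1 : 'M[R[i]]_n) :
  psd A0 -> psd A1 -> completely_positive (mp A0 A1).
Proof.
move=> h0 h1 k X hX; apply: psd_of_qf => v.
pose w (a : 'I_2) (i : 'I_k) := v (mxtens_index (i, a)) ord0.
suff -> : qf (ampl (mp A0 A1) X) v = \sum_a \sum_i \sum_j
   conjc (w a i) * \tr ((if a == 0 then A0 else A1) *m blk X i j) * w a j.
  apply: sumr_ge0 => a _; apply: blockform => //; by case: (a == 0).
rewrite qf_sum sum_tens exchange_big /=; apply: eq_bigr => a _.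
apply: eq_bigr => i _; rewrite sum_tens; apply: eq_bigr => j _.
under eq_bigr => b _ do rewrite !mxE !mxtens_indexK /=.
apply: etrans (_ : _ = \sum_b (conjc (v (mxtens_index (i, a)) ord0) *
  \tr ((if a == 0 then A0 else A1) *m blk X i j) * v (mxtens_index (j, b)) ord0) * (a == b)%:R) _.
  by apply: eq_bigr => b _; ring.
by rewrite sum_kron.
Qed.

Section S2.
Variable R : realType.
Local Notation C := R[i].

Lemma tr2 (M : 'M[C]_2) : \tr M = M 0 0 + M 1 1.
Proof.
rewrite /mxtrace big_ord_recl big_ord1.
by have -> : lift ord0 ord0 = 1 :> 'I_2 by apply: val_inj.
Qed.

Lemma ReC (x : R) : complex.Re (x%:C%C) = x. Proof. by []. Qed.

Lemma col_norm (U : 'M[C]_2) j : unitary U ->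
  complex.Re (U 0 j) ^+ 2 + complex.Im (U 0 j) ^+ 2 +
   (complex.Re (U 1 j) ^+ 2 + complex.Im (U 1 j) ^+ 2) = 1.
Proof.
rewrite /unitary => hU.
have := congr1 (fun M : 'M[C]_2 => complex.Re (M j j)) hU.
rewrite /= !mxE eqxx /= big_ord_recl big_ord1.
have -> : lift ord0 ord0 = 1 :> 'I_2 by apply: val_inj.
rewrite ReD !mxE !ReM => <-.
case: (U 0 j) => [a b]; case: (U 1 j) => [c d] /=; ring.
Qed.

Lemma trnorm_bound (D : 'M[C]_2) t : is_trnorm D t ->
  complex.Re (D 0 0 - D 1 1) <= t.
Proof.
move=> [U [V [s [hU hV hs -> ->]]]].
rewrite mul_mx_diag !mxE ReB !Re_sum -sumrB; apply: ler_sum => j _.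
rewrite !mxE.
have := col_norm j hU; have := col_norm j hV; have := hs j.
case: (U 0 j) => [a b]; case: (U 1 j) => [c d].
case: (V 0 j) => [e f]; case: (V 1 j) => [g h].
rewrite !ReM !ImM /= => h1 h2 h3.
have -> : s 0 j = s ord0 j by [].
have := mulr_ge0 h1 (_ : 0 <= (a-e)^+2+(b-f)^+2+(c+g)^+2+(d+h)^+2).
move=> /(_ ltac:(by rewrite !addr_ge0 ?sqr_ge0)) hh; nra.
Qed.
End S2.

Section S3.
Variable R : realType.
Local Notation C := R[i].

Lemma psd_vv n (v : 'cV[C]_n) : psd (v *m adj v).
Proof.
apply: psd_of_qf => u.
have -> : qf (v *m adj v) u = (adj v *m u) 0 0 * conjc ((adj v *m u) 0 0).
  rewrite /qf !mulmxA -(mulmxA _ (adj v)) mxE big_ord1 mulrC; congr (_ * _).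
  have := congr1 (fun M : 'M[C]_1 => M 0 0) (adjM (adj v) u).
  by rewrite adjK /= mxE => <-.
exact: mulcJ_ge0.
Qed.

Definition Ek n (F : 'M[C]_n -> 'M[C]_2) : 'M[C]_n :=
  \matrix_(c, d) F (delta_mx d c) 1 1.

Lemma tr_Ek n (F : {linear 'M[C]_n -> 'M[C]_2}) (X : 'M[C]_n) :
  \tr (X *m Ek F) = F X 1 1.
Proof.
rewrite [in RHS](matrix_sum_delta X) linear_sum summxE /mxtrace.
apply: eq_bigr => c _; rewrite linear_sum summxE mxE.
by apply: eq_bigr => d _; rewrite linearZ !mxE.
Qed.

Lemma pos_of_CP n (F : {linear 'M[C]_n -> 'M[C]_2}) (Y : 'M[C]_n) a :
  completely_positive F -> psd Y -> 0 <= F Y a a.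
Proof.
move=> hF hY.
pose X1 : 'M[C]_(1 * n) :=
  \matrix_(p, q) Y (mxtens_unindex p).2 (mxtens_unindex q).2.
have hX1 : psd X1.
  apply: psd_of_qf => v.
  have -> : qf X1 v = qf Y (\col_c v (mxtens_index (ord0, c)) ord0).
    rewrite !qf_sum sum_tens big_ord1; apply: eq_bigr => c _.
    rewrite sum_tens big_ord1; apply: eq_bigr => d _.
    by rewrite !mxE !mxtens_indexK.
  by case: hY => _ h; apply: h.
have hb : blk X1 ord0 ord0 = Y.
  by apply/matrixP => c d; rewrite !mxE !mxtens_indexK.
have := (hF 1%N X1 hX1).2 (delta_mx (mxtens_index (ord0, a)) ord0).
by rewrite -/(qf _ _) qf_delta !mxE !mxtens_indexK /= hb.
Qed.

Lemma Ek_effect n (F : {linear 'M[C]_n -> 'M[C]_2}) : CPTP F -> effect (Ek F).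
Proof.
move=> [hCP hTP]; split; apply: psd_of_qf => v.
  by rewrite qf_tr tr_Ek; apply: pos_of_CP => //; exact: psd_vv.
rewrite qfB !qf_tr mulmx1 tr_Ek -hTP tr2 addrK.
by apply: pos_of_CP => //; exact: psd_vv.
Qed.

Lemma claimB n (Ps Es : set 'M[C]_n) eps M :
  Ps `<=` @density R n -> Es `<=` @density R n ->
  gpo_feasible Ps Es eps M ->
  exists E, Dmin_feasible Ps eps E /\ (supTr Es E <= (M^-1)%:E)%E.
Proof.
move=> hPs hEs [M1 [F [hF hP hE]]].
exists (Ek F); split; first split; first exact: Ek_effect.
  move=> rho /[dup] /hPs [_ tr1] /hP [t [ht t2]].
  have hTP := hF.2 rho; rewrite tr1 tr2 in hTP.
  have := trnorm_bound ht.
  rewrite !mxE /= mulmxBr mulmx1 mxtraceD raddfN /= tr1 tr_Ek.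
  have -> : F rho 0 0 = 1 - F rho 1 1 by rewrite -hTP addrK.
  case: (F rho 1 1) => a b; rewrite /= => h; lra.
have M0 : 0 < M by apply: lt_trans M1.
rewrite /supTr; apply: ge_ereal_sup => _ [-> | [tau htau <-]].
  by rewrite lee_fin invr_ge0 ltW.
rewrite tr_Ek; have [M' [hM' ->]] := hE tau htau.
rewrite /piM !mxE /= lee_fin lef_pV2 ?posrE //.
exact: lt_le_trans hM'.
Qed.

Lemma ord2P (a : 'I_2) : a = 0 \/ a = 1.
Proof.
case: a => [[|[|k]]] h; [left | right | by []]; exact: val_inj.
Qed.

Lemma qf1_ge0 n (v : 'cV[C]_n) : 0 <= qf 1%:M v.
Proof.
rewrite /qf mulmx1 mxE; apply: sumr_ge0 => i _; rewrite !mxE mulrC.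
exact: mulcJ_ge0.
Qed.

Lemma realC_ge0 (x : R) : (0 <= x%:C%C) = (0 <= x).
Proof. by rewrite ge0C /= eqxx. Qed.

Lemma tr_real_ge0 n (A X : 'M[C]_n) : psd A -> psd X ->
  \tr (A *m X) = (complex.Re (\tr (A *m X)))%:C%C /\ 0 <= complex.Re (\tr (A *m X)).
Proof.
move=> hA [_ hX]; have := tr_psd_ge0 hA hX => h.
by split; [exact: ge0C_real | move: h; rewrite ge0C => /andP[]].
Qed.

Lemma C_ext (x y : C) : complex.Re x = complex.Re y -> complex.Im x = complex.Im y -> x = y.
Proof. by case: x => a b; case: y => c d /= -> ->. Qed.

Lemma Re1 : complex.Re (1 : C) = 1. Proof. by []. Qed.
Lemma Im1 : complex.Im (1 : C) = 0. Proof. by []. Qed.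

Lemma ReCM (x : R) (z : C) : complex.Re (x%:C%C * z) = x * complex.Re z.
Proof. by rewrite ReM /= mul0r subr0. Qed.

Lemma claimA n (Ps Es : set 'M[C]_n) eps (E : 'M[C]_n) M s0 :
  Ps `<=` @density R n -> Es `<=` @density R n -> 0 <= eps ->
  Dmin_feasible Ps eps E -> 1 < M -> 0 <= s0 -> s0 < M^-1 ->
  (forall tau, Es tau -> complex.Re (\tr (tau *m E)) <= s0) ->
  gpo_feasible Ps Es eps M.
Proof.
move=> hPs hEs he0 [[hE hIE] hEP] M1 s00 s0M hs.
have M0 : 0 < M by apply: lt_trans M1.
have Mi1 : M^-1 < 1 by rewrite invf_lt1.
pose c := M^-1 - s0.
have c0 : 0 < c by rewrite subr_gt0.
have c1 : c < 1 by rewrite /c; lra.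
pose A0 : 'M[C]_n := (1 - c)%:C%C *: (1%:M - E).
pose A1 : 'M[C]_n := (1 - c)%:C%C *: E + c%:C%C *: 1%:M.
have hsum : A0 + A1 = 1%:M.
  apply/matrixP => i j; rewrite !mxE.
  case: (i == j); rewrite /= ?mulr1n ?mulr0n; ring.
have hA0 : psd A0.
  apply: psd_of_qf => v; rewrite qfZ; apply: mulr_ge0.
    by rewrite realC_ge0; lra.
  by case: hIE => _; apply.
have hA1 : psd A1.
  apply: psd_of_qf => v; rewrite qfD !qfZ; apply: addr_ge0; apply: mulr_ge0.
  - by rewrite realC_ge0; lra.
  - by case: hE => _; apply.
  - by rewrite realC_ge0; lra.
  - exact: qf1_ge0.
have trsum X : \tr (A0 *m X) + \tr (A1 *m X) = \tr X.
  by rewrite -mxtraceD -mulmxDl hsum mul1mx.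
split => //; exists (mp A0 A1); split.
{ split; first exact: mp_CP.
  by move=> X; rewrite tr2 !mxE /= !mulr1n !mul1r trsum. }
{ move=> rho /[dup] /hPs [hrho tr1] /hEP hre.
  have [e0 g0] := tr_real_ge0 hA0 hrho.
  set s := complex.Re (\tr (A0 *m rho)) in e0 g0.
  have hsle : s <= eps.
    rewrite /s /A0 -scalemxAl mxtraceZ ReCM mxtrace_mulC.
    have : 0 <= (1 - c) * (eps - complex.Re (\tr (rho *m (1%:M - E)))).
      by apply: mulr_ge0; lra.
    nra.
  have e1 : \tr (A1 *m rho) = (1 - s)%:C%C.
    have := trsum rho; rewrite tr1 e0 => h.
    by rewrite -[LHS](addKr (s%:C%C)) h rmorphB rmorph1 addrC.
  pose Vd : 'M[C]_2 := diag_mx (\row_(a < 2) (if a == 0 then 1 else -1)).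
  exists (s + s); split; last by lra.
  exists 1%:M, Vd, (const_mx s); split.
  { by rewrite /unitary adj1 mul1mx. }
  { rewrite /unitary; apply/matrixP => a b.
    case: (ord2P a) => ->; case: (ord2P b) => ->; rewrite !mxE big_ord_recl big_ord1 !mxE /=.
    all: rewrite ?mulr0n ?mulr1n ?mulr0 ?mulr1 ?addr0 ?add0r ?mulrN1.
    all: by refine (C_ext _ _); rewrite /= ?oppr0 ?opprK. }
  { by move=> i; rewrite mxE. }
  { rewrite mul1mx mul_diag_mx; apply/matrixP => a b.
    case: (ord2P a) => ->; case: (ord2P b) => ->; rewrite !mxE /= ?e0 ?e1.
    all: by refine (C_ext _ _); rewrite ?ReB ?ImB ?ReM ?ImM /=; ring. }
  { by rewrite big_ord_recl big_ord1 !mxE. } }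
move=> tau /[dup] /hEs [htau tr1] /hs hst.
have [ee ge] := tr_real_ge0 hE htau.
rewrite mxtrace_mulC in hst.
set x := complex.Re (\tr (E *m tau)) in ee ge hst.
pose t := (1 - c) * x + c.
have e1 : \tr (A1 *m tau) = t%:C%C.
  rewrite /A1 mulmxDl -!scalemxAl mul1mx mxtraceD !mxtraceZ tr1 ee mulr1.
  by refine (C_ext _ _); rewrite ?ReD ?ImD ?ReM ?ImM /= /t; ring.
have e0 : \tr (A0 *m tau) = (1 - t)%:C%C.
  have := trsum tau; rewrite tr1 e1 => h.
  rewrite -[LHS](addrK (t%:C%C)) h.
  by refine (C_ext _ _); rewrite ?ReD ?ImD ?ReB ?ImB ?Re1 ?Im1 /= ?subrr.
have t0 : 0 < t by rewrite /t; nra.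
have tM : t <= M^-1 by rewrite /t /c; nra.
exists t^-1; split.
  by rewrite -[M]invrK lef_pV2 ?posrE ?invr_gt0.
apply/matrixP => a b.
case: (ord2P a) => ->; case: (ord2P b) => ->; rewrite !mxE /= ?e0 ?e1 invrK.
all: by refine (C_ext _ _); rewrite ?ReB ?ImB ?ReM ?ImM /=; ring.
Qed.
End S3.

Section S4.
Variable R : realType.
Local Notation C := R[i].
Variables (n : nat) (eps : R) (Ps Es : set 'M[C]_n).
Hypotheses (heps0 : 0 <= eps) (hPs : Ps `<=` @density R n) (hEs : Es `<=` @density R n).

Lemma supTr_ge0 E : (0 <= supTr Es E)%E.
Proof. by apply: ereal_sup_ubound; left. Qed.

Lemma feas1 : Dmin_feasible Ps eps (1%:M : 'M[C]_n).
Proof.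
split; last by move=> rho _; rewrite subrr mulmx0 mxtrace0.
split; apply: psd_of_qf => v; first exact: qf1_ge0.
by rewrite subrr /qf mulmx0 mul0mx mxE.
Qed.

Lemma supTr1 : (supTr Es (1%:M : 'M[C]_n) <= 1)%E.
Proof.
apply: ge_ereal_sup => _ [-> | [tau /hEs [_ tr1] <-]]; first by rewrite lee_fin.
by rewrite mulmx1 tr1.
Qed.

Let m := ereal_inf [set supTr Es E | E in Dmin_feasible Ps eps].

Lemma m_ge0 : (0 <= m)%E.
Proof. by apply: le_ereal_inf_tmp => _ [E _ <-]; exact: supTr_ge0. Qed.

Lemma m_le1 : (m <= 1)%E.
Proof.
apply: le_trans supTr1; apply: ereal_inf_lbound; exists 1%:M => //; exact: feas1.
Qed.

Lemma featA K : 1 < K -> (m < (K^-1)%:E)%E -> gpo_feasible Ps Es eps K.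
Proof.
move=> K1 /ereal_inf_lt [_ [E hE <-] hlt].
have hfin : supTr Es E \is a fin_num.
  by rewrite ge0_fin_numE ?supTr_ge0 // (lt_trans hlt) ?ltry.
apply: (claimA hPs hEs heps0 hE K1 (s0 := fine (supTr Es E))).
- by rewrite -lee_fin fineK ?supTr_ge0.
- by rewrite -lte_fin fineK.
- move=> tau htau; rewrite -lee_fin fineK //.
  by apply: ereal_sup_ubound; right; exists tau.
Qed.

Lemma featB K : gpo_feasible Ps Es eps K -> (m <= (K^-1)%:E)%E.
Proof.
move=> hK; have [E [hE hle]] := claimB hPs hEs hK.
apply: le_trans hle; apply: ereal_inf_lbound; by exists E.
Qed.
End S4.

Unset Implicit Arguments.

Theorem theorem6 (R : realType) (n : nat) (eps : R)
  (Ps Es : set 'M[R[i]]_n)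
  (heps0 : 0 <= eps) (heps1 : eps < 1)
  (hPs : Ps `<=` @density R n) (hEs : Es `<=` @density R n) :
  betaW_GPO Ps Es eps = Dmin Ps Es eps.
Proof.
have hA := featA heps0 hPs hEs.
have hB := @featB R n eps Ps Es hPs hEs.
have m0 := m_ge0 eps Ps Es.
have m1 := m_le1 Ps heps0 hEs.
rewrite /betaW_GPO /Dmin /=.
set m := ereal_inf _ in hA hB m0 m1 *.
set S := ([set 1%E] `|` _).
have S1 : (1 <= ereal_sup S)%E by apply: ereal_sup_ubound; left.
have inS K : gpo_feasible Ps Es eps K -> (K%:E <= ereal_sup S)%E.
  by move=> hK; apply: ereal_sup_ubound; right; exists K.
case: ifP => [/eqP me | /negbT mn0].
  suff -> : ereal_sup S = +oo%E by [].
  case E: (ereal_sup S) => [r| |] //; last by rewrite E in S1.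
  exfalso; pose K := `|r| + 2.
  have K1 : 1 < K by rewrite /K; have := normr_ge0 r; lra.
  have : (K%:E <= r%:E)%E.
    rewrite -E; apply: inS; apply: hA => //.
    by rewrite me lte_fin invr_gt0; lra.
  by rewrite lee_fin /K; have := ler_norm r; lra.
have mfin : m \is a fin_num by rewrite ge0_fin_numE // (le_lt_trans m1) ?ltry.
set mr := fine m.
have mE : m = mr%:E by rewrite fineK.
have mr0 : 0 < mr.
  rewrite lt_def; apply/andP; split; last by rewrite -lee_fin -mE.
  by apply: contra mn0 => /eqP h; rewrite mE h.
have mr1 : mr <= 1 by rewrite -lee_fin -mE.
suff -> : ereal_sup S = (mr^-1)%:E by rewrite /lnE lnV ?posrE.
apply/eqP; rewrite eq_le; apply/andP; split.
  apply: ge_ereal_sup => _ [-> | [K hK <-]].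
    by rewrite lee_fin invf_ge1.
  have K0 : 0 < K by case: hK => K1 _; lra.
  have := hB K hK; rewrite mE lee_fin => h.
  by rewrite lee_fin -[K]invrK lef_pV2 ?posrE ?invr_gt0.
rewrite leNgt; apply/negP => hlt.
have sfin : ereal_sup S \is a fin_num.
  by rewrite ge0_fin_numE ?(le_trans _ S1) ?lee_fin // (lt_trans hlt) ?ltry.
set r := fine (ereal_sup S).
have rE : ereal_sup S = r%:E by rewrite fineK.
rewrite rE lte_fin in hlt; rewrite rE lee_fin in S1.
pose K := (r + mr^-1) / 2.
have K1 : 1 < K by rewrite /K; lra.
have : (K%:E <= r%:E)%E.
  rewrite -rE; apply: inS; apply: hA => //.
  rewrite mE lte_fin -[mr]invrK ltf_pV2 ?posrE ?invr_gt0 //; last by lra.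
  by rewrite /K; lra.
by rewrite lee_fin /K; lra.
Qed.
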